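(* Let $M$ be a connected smooth Riemannian manifold. Let $\omega\in W(\hat M)$ be such that, if $\alpha_M(\omega)<\infty$, then $\omega(t)=\infty_M$ for all $t\ge\alpha_M(\omega)$. Let $\Omega\subset M$ be open and let $\Omega_n\subset\Omega$, $n\in\mathbb N$, be open with $\Omega_n\subset\Omega_{n+1}$, $\omega(0)\in\Omega_1$ and $\bigcup_n\Omega_n=\Omega$. (a) $\alpha_{\Omega_n}(\omega)\nearrow\alpha_\Omega(\omega)$ as $n\to\infty$. (b) If in addition for each $n$ there is an open $\Upsilon_n\subset M$ with $\Upsilon_n\cap\Omega=\Omega_n$ and $\overline\Omega=\bigcup_n(\overline\Omega\cap\Upsilon_n)$, then $\beta_{\Omega_n}(\omega)\nearrow\beta_\Omega(\omega)$ as $n\to\infty$.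
   Context: $\hat M=M\cup\{\infty_M\}$ is the one-point compactification if $M$ is noncompact, $\hat M=M$ if compact; $W(\hat M)$ is the space of continuous paths $[0,\infty)\to\hat M$, and $\mathbb X_t(\omega)=\omega(t)$. For $U\subset\hat M$ open: $\alpha_U(\omega)=\inf\{t>0:\omega(t)\in\hat M\setminus U\}$ and $\beta_U(\omega)=\inf\{t>0:\int_0^t1_{\hat M\setminus U}(\omega(s))ds>0\}$, with $\inf\emptyset=\infty$. Closures $\overline\Omega$ are taken in $M$. *)

(* Defs.v *)
From HB Require Import structures.
From mathcomp Require Import all_boot all_order all_algebra.
From mathcomp Require Import all_classical all_reals all_analysis.
Set Implicit Arguments. Unset Strict Implicit. Unset Printing Implicit Defensive.
Import Order.TTheory GRing.Theory Num.Theory.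
Import numFieldNormedType.Exports.
Local Open Scope classical_set_scope.
Local Open Scope ring_scope.

(* The one-point compactification \hat M of M (library: option M, with None =
   the point at infinity \infty_M). *)
Notation hatM M := (one_point_compactification M).

Definition inhat {M : topologicalType} (U : set M) : set (hatM M) := Some @` U.

(* W(\hat M): continuous paths [0,oo) -> \hat M (represented as functions on R
   whose restriction to [0,oo) is continuous; values at t<0 are irrelevant). *)
Definition path_space (R : realType) (M : topologicalType) (w : R -> hatM M) :=
  {within `[0, +oo[%classic, continuous w}.

Definition alpha (R : realType) (M : topologicalType) (U : set (hatM M))
    (w : R -> hatM M) : \bar R :=
  ereal_inf [set t%:E | t in [set t : R | 0 < t /\ ~ U (w t)]].

Definition beta (R : realType) (M : topologicalType) (U : set (hatM M))
    (w : R -> hatM M) : \bar R :=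
  ereal_inf [set t%:E | t in [set t : R | 0 < t /\
     (0%E < \int[@lebesgue_measure R]_(s in `[0%R, t]%classic) (\1_(~` U) (w s))%:E)%E]].

(* Main.v *)
Require Import Defs.
From HB Require Import structures.
From mathcomp Require Import all_boot all_order all_algebra.
From mathcomp Require Import all_classical all_reals all_analysis.
From mathcomp Require Import lra.
Import Order.TTheory GRing.Theory Num.Theory.
Import numFieldNormedType.Exports.
Local Open Scope classical_set_scope.
Local Open Scope ring_scope.

Lemma int_mono (R : realType) (D : set R) (f g : R -> \bar R) :
  (forall x, D x -> (0 <= f x)%E) -> (forall x, D x -> (f x <= g x)%E) ->
  (\int[@lebesgue_measure R]_(x in D) f x <= \int[@lebesgue_measure R]_(x in D) g x)%E.
Proof.
move=> f0 fg.
have g0 : forall x, D x -> (0 <= g x)%E by move=> x Dx; exact: le_trans (f0 x Dx) (fg x Dx).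
rewrite !ge0_integralE//; apply: ereal_sup_le => _ [h hf <-]; exists h => //= x.
exact: le_trans (hf x) (lee_restrict fg x).
Qed.

Lemma einf_ge0 (R : realType) (P : set R) : (forall t, P t -> 0 < t) ->
  (0 <= ereal_inf [set t%:E | t in P])%E.
Proof. by move=> HP; apply: le_ereal_inf_tmp => _ [t Pt <-]; rewrite lee_fin ltW// HP. Qed.

Lemma einf_le (R : realType) (P : set R) t : P t ->
  (ereal_inf [set t%:E | t in P] <= t%:E)%E.
Proof. by move=> Pt; apply: ereal_inf_lbound; exists t. Qed.

Lemma indic_in (T : Type) (R : realType) (A : set T) x : A x -> \1_A x = 1 :> R.
Proof. by move=> Ax; rewrite indicE mem_set. Qed.

Lemma indic_out (T : Type) (R : realType) (A : set T) x : ~ A x -> \1_A x = 0 :> R.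
Proof. by move=> Ax; rewrite indicE memNset. Qed.

Lemma edense (R : realType) (s : R) (a : \bar R) : (s%:E < a)%E ->
  exists T : R, s < T /\ (T%:E < a)%E.
Proof.
case: a => [b| |] //.
  rewrite lte_fin => sb; exists ((s + b) / 2); split; rewrite ?lte_fin; lra.
move=> _; exists (s + 1); split; [lra|exact: ltry].
Qed.

Lemma cvg_esup_lim (R : realType) (u : nat -> \bar R) (a : \bar R) :
  {homo u : m n / (m <= n)%N >-> (m <= n)%E} ->
  (forall n, (0 <= u n)%E) -> (forall n, (u n <= a)%E) ->
  (forall T : R, 0 < T -> (T%:E < a)%E -> exists n, (T%:E <= u n)%E) ->
  u @ \oo --> a.
Proof.
move=> nd u0 ua Hd.
have -> : a = ereal_sup (range u); last exact: ereal_nondecreasing_cvgn.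
apply/eqP; rewrite eq_le; apply/andP; split; last first.
  by apply: ge_ereal_sup => _ [n _ <-].
rewrite leNgt; apply/negP => Sa.
have S0 : (0 <= ereal_sup (range u))%E.
  by apply: le_trans (u0 0%N) _; apply: ereal_sup_ubound; exists 0%N.
move: Sa S0; case E : (ereal_sup (range u)) => [s| |] //; last by rewrite ltNge leey.
move=> sa s0; have [T [sT Ta]] := @edense _ _ _ sa.
have T0 : 0 < T by rewrite lee_fin in s0; lra.
have [n Tn] := Hd T T0 Ta.
have : (u n <= s%:E)%E by rewrite -E; apply: ereal_sup_ubound; exists n.
move=> uns; have := le_trans Tn uns; rewrite lee_fin; lra.
Qed.
Lemma chain_mono (T : Type) (Om : nat -> set T) :
  (forall n, Om n `<=` Om n.+1) -> forall m n, (m <= n)%N -> Om m `<=` Om n.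
Proof.
move=> H m n /subnK <-; elim: (n - m)%N => //= k IH.
by rewrite addSn; exact: subset_trans IH (H _).
Qed.

Lemma itv_sub0 (R : realType) (T : R) : `[0, T] `<=` `[0, +oo[.
Proof. by move=> t; rewrite /= !in_itv /= => /andP[-> _]. Qed.

Lemma alpha_key (R : realType) (M : topologicalType) (w : R -> hatM M)
  (wc : path_space w) (Omega : set M) (Om : nat -> set M)
  (Om_open : forall n, open (Om n)) (Om_sub : forall n, Om n `<=` Omega)
  (Om_incr : forall n, Om n `<=` Om n.+1)
  (w0 : exists x0, Om 0%N x0 /\ w 0 = Some x0)
  (Om_cover : \bigcup_n Om n = Omega) (T : R) :
  0 < T -> (T%:E < alpha (inhat Omega) w)%E ->
  exists n, (T%:E <= alpha (inhat (Om n)) w)%E.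
Proof.
move=> T0 Ta.
have inK : forall t, 0 <= t <= T -> inhat Omega (w t).
  move=> t /andP[t0 tT]; have [->|tn0] := eqVneq t 0.
    by case: w0 => x0 [Ox0 ->]; exists x0 => //; exact: Om_sub Ox0.
  apply: contrapT => nin.
  have : (alpha (inhat Omega) w <= t%:E)%E.
    by rewrite /alpha; apply: (@einf_le _ _ t); split => //; rewrite lt_neqAle eq_sym tn0.
  move=> at_; have := lt_le_trans Ta at_; rewrite lte_fin; lra.
have Kc : compact (w @` `[0, T]).
  apply: continuous_compact; last exact: segment_compact.
  exact: continuous_subspaceW (@itv_sub0 R T) wc.
rewrite compact_cover in Kc.
have cov0 : w @` `[0, T] `<=` cover setT (fun n => inhat (Om n)).
  move=> _ [t tK <-]; rewrite /= in_itv /= in tK.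
  have [x Ox <-] := inK t tK; rewrite -Om_cover in Ox; case: Ox => n _ Onx.
  by exists n => //; exists x.
have [D' _ cov] := Kc nat setT (fun n => inhat (Om n))
  (fun n _ => @one_point_compactification_open_some _ _ (Om_open n)) cov0.
exists (\max_(i <- finmap.enum_fset D') i)%N.
apply: le_ereal_inf_tmp => _ [t [t0 tn] <-]; rewrite lee_fin leNgt; apply/negP => tT.
case: (cov (w t)).
  by exists t => //; rewrite /= in_itv /= (ltW t0) (ltW tT).
move=> i Di [x Oix wtx]; apply: tn; exists x => //.
have := @leq_bigmax_seq _ (finmap.enum_fset D') xpredT (fun i => i) i Di isT. move=> /(@chain_mono _ Om Om_incr); apply; exact: Oix.
Qed.
Lemma ind_le (T : Type) (R : realType) (A B : set T) x :
  (B x -> A x) -> (\1_B x <= \1_A x :> R).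
Proof.
move=> BA; case: (pselect (B x)) => Bx.
  by rewrite !indic_in//; exact: BA.
by rewrite (@indic_out _ _ _ _ Bx) indicE ler0n.
Qed.

Lemma ind_ge0 (T : Type) (R : realType) (A : set T) x : (0 <= \1_A x :> R).
Proof. by rewrite indicE ler0n. Qed.

Section BetaLemmas.
Variables (R : realType) (M : topologicalType) (w : R -> hatM M).

Definition fU (U : set (hatM M)) (s : R) : \bar R := (\1_(~` U) (w s))%:E.

Lemma int_monoU (U V : set (hatM M)) (D : set R) :
  (forall s, D s -> U (w s) -> V (w s)) ->
  (\int[@lebesgue_measure R]_(s in D) fU V s <=
   \int[@lebesgue_measure R]_(s in D) fU U s)%E.
Proof.
move=> UV; apply: int_mono => s Ds; rewrite /fU lee_fin ?ind_ge0//.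
by apply: ind_le => nV Us; apply: nV; exact: UV.
Qed.

Lemma beta_homoU (U V : set (hatM M)) : U `<=` V -> (beta U w <= beta V w)%E.
Proof.
move=> UV; apply: ereal_inf_le_tmp => _ [t [t0 It] <-]; exists t => //; split => //.
exact: (lt_le_trans It (@int_monoU U V _ (fun s _ => @UV (w s)))).
Qed.

Lemma pos_int (U : set (hatM M)) (a b c : R) : 0 <= a -> a < b -> b <= c ->
  (forall t, a <= t <= b -> ~ U (w t)) ->
  (0 < \int[@lebesgue_measure R]_(s in `[0%R, c]%classic) fU U s)%E.
Proof.
move=> a0 ab bc H.
have sab : `[a, b]%classic `<=` `[0%R, c]%classic.
  by move=> t; rewrite /= !in_itv /= => /andP[at_ tb]; apply/andP; split; lra.
apply: (@lt_le_trans _ _ (\int[@lebesgue_measure R]_(s in (`[0%R, c]%classic : set R)) (\1_(`[a, b]%classic : set R) s)%:E)%E).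
  rewrite integral_indic; [|exact: measurable_itv|exact: measurable_itv].
  rewrite setIidl; last exact: sab.
  have L := @lebesgue_measure_itv R `[a, b]%R.
  rewrite /= lte_fin ab in L.
  suff : (0 < lebesgue_measure `[a, b]%classic)%E by [].
  rewrite L -EFinD lte_fin; lra.
apply: int_mono => s _; rewrite lee_fin ?ind_ge0//.
case: (pselect ((`[a, b]%classic : set R) s)) => sin.
  rewrite (@indic_in _ R _ _ sin) (@indic_in _ R _ _) //.
  by apply: H; move: sin; rewrite /= in_itv /=.
by rewrite (@indic_out _ R _ _ sin) ind_ge0.
Qed.

Lemma beta_lt (U : set (hatM M)) (t : R) : 0 < t -> (t%:E < beta U w)%E ->
  ~ (0 < \int[@lebesgue_measure R]_(s in `[0%R, t]%classic) fU U s)%E.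
Proof.
move=> t0 tb H.
have : (beta U w <= t%:E)%E by rewrite /beta; apply: (@einf_le _ _ t).
by rewrite leNgt tb.
Qed.

Lemma cont_at (wc : path_space w) (s : R) (V : set (hatM M)) :
  0 <= s -> nbhs (w s) V ->
  exists2 d, 0 < d & forall t, 0 <= t -> `|s - t| < d -> V (w t).
Proof.
move=> s0 nV; have /subspace_continuousP := wc.
move=> /(_ s _ V nV); rewrite /= in_itv /= s0 => /(_ isT).
move=> /nbhs_ballP [d d0 Hd]; exists d => // t t0 st; apply: Hd.
  by rewrite /ball /=.
by rewrite /= in_itv /= t0.
Qed.

End BetaLemmas.
Lemma beta_key (R : realType) (M : topologicalType) (w : R -> hatM M)
  (wc : path_space w)
  (w_absorbed : (alpha (inhat [set: M]) w < +oo)%E ->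
        forall t : R, (alpha (inhat [set: M]) w <= t%:E)%E -> w t = None)
  (Omega : set M) (Om : nat -> set M)
  (Om_incr : forall n, Om n `<=` Om n.+1)
  (w0 : exists x0, Om 0%N x0 /\ w 0 = Some x0)
  (Ups : nat -> set M) (Ups_open : forall n, open (Ups n))
  (UpsO : forall n, Ups n `&` Omega = Om n)
  (Ucov : closure Omega = \bigcup_n (closure Omega `&` Ups n))
  (T T' : R) :
  0 < T -> T < T' -> (T'%:E < beta (inhat Omega) w)%E ->
  exists n, (T%:E <= beta (inhat (Om n)) w)%E.
Proof.
move=> T0 TT' Tb.
have Hint := @beta_lt R M w (inhat Omega) T' (lt_trans T0 TT') Tb.
have nz : forall a b, 0 <= a -> a < b -> b <= T' ->
    exists t, a <= t <= b /\ inhat Omega (w t).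
  move=> a b a0 ab bT; apply: contrapT => Hn; apply: Hint.
  apply: (@pos_int R M w _ a b T' a0 ab bT) => t tab Ot; apply: Hn; exists t; split => //.
have pt : forall s, 0 <= s <= T -> exists2 x, w s = Some x & closure Omega x.
  move=> s /andP[s0 sT]; case E : (w s) => [x|].
    exists x => // B nB.
    have nS := @one_point_compactification_some_nbhs _ _ _ nB.
    rewrite -E in nS; have [d d0 Hd] := @cont_at R M w wc s _ s0 nS.
    have h1 : s < Order.min (s + d / 2) T' by rewrite lt_min; apply/andP; split; lra.
    have h2 : Order.min (s + d / 2) T' <= T' by rewrite ge_min lexx orbT.
    have [t [/andP[st tb] [y Oy wty]]] := nz s (Order.min (s + d / 2) T') s0 h1 h2.
    move: tb; rewrite le_min => /andP[tb1 tb2].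
    have ht0 : 0 <= t by lra.
    have htd : `|s - t| < d by rewrite ler0_norm; lra.
    move: (Hd t ht0 htd); rewrite -wty => -[z Bz zy].
    by case: zy => zy; exists y; split => //; rewrite -zy.
  exfalso; case: w0 => x0 [_ E0].
  have sn0 : s != 0 by apply/eqP => s0'; move: E; rewrite s0' E0.
  have spos : 0 < s by rewrite lt_neqAle eq_sym sn0.
  have al : (alpha (inhat [set: M]) w <= s%:E)%E.
    rewrite /alpha; apply: (@einf_le _ _ s); split => //; rewrite E; by case.
  have alf : (alpha (inhat [set: M]) w < +oo)%E by apply: le_lt_trans al _; exact: ltry.
  apply: Hint; apply: (@pos_int R M w _ s T' T' (ltW spos) (le_lt_trans sT TT') (lexx _)).
  move=> t /andP[st _].
  have -> : w t = None by apply: (w_absorbed alf t); apply: le_trans al _; rewrite lee_fin.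
  by case.
have Kc : compact (w @` `[0, T]).
  apply: continuous_compact; last exact: segment_compact.
  exact: continuous_subspaceW (@itv_sub0 R T) wc.
rewrite compact_cover in Kc.
have cov0 : w @` `[0, T] `<=` cover setT (fun n => inhat (Ups n)).
  move=> _ [s sK <-]; rewrite /= in_itv /= in sK.
  have [x -> cx] := pt s sK; rewrite Ucov in cx; case: cx => n _ [_ Ux].
  by exists n => //; exists x.
have [D' _ cov] := Kc nat setT (fun n => inhat (Ups n))
  (fun n _ => @one_point_compactification_open_some _ _ (Ups_open n)) cov0.
exists (\max_(i <- finmap.enum_fset D') i)%N.
apply: le_ereal_inf_tmp => _ [t [t0 It] <-]; rewrite lee_fin leNgt; apply/negP => tT.
have tb : (t%:E < beta (inhat Omega) w)%E by apply: lt_trans Tb; rewrite lte_fin; lra.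
apply: (@beta_lt R M w (inhat Omega) t t0 tb).
apply: lt_le_trans It _; apply: (@int_monoU R M w) => s sin [y Oy wsy].
move: sin; rewrite /= in_itv /= => /andP[s0 st].
case: (cov (w s)).
  by exists s => //; rewrite /= in_itv /= s0 /=; apply: ltW; apply: le_lt_trans st tT.
move=> i Di [z Uz wsz]; exists y => //.
have Oiy : Om i y.
  rewrite -UpsO; split => //; move: wsz; rewrite -wsy; by case=> <-.
have := @leq_bigmax_seq _ (finmap.enum_fset D') xpredT (fun i => i) i Di isT.
move=> /(@chain_mono _ Om Om_incr); apply; exact: Oiy.
Qed.
Lemma inhat_sub (M : topologicalType) (U V : set M) : U `<=` V -> inhat U `<=` inhat V.
Proof. by move=> UV _ [x Ux <-]; exists x => //; exact: UV. Qed.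

Lemma alpha_homoU (R : realType) (M : topologicalType) (w : R -> hatM M)
  (U V : set (hatM M)) : U `<=` V -> (alpha U w <= alpha V w)%E.
Proof.
move=> UV; apply: ereal_inf_le_tmp => _ [t [t0 It] <-]; exists t => //; split => //.
by move=> /UV.
Qed.

Theorem mainTheorem4 (R : realType) (M : topologicalType)
    (M_hausdorff : hausdorff_space M)
    (M_loc_compact : locally_compact [set: M])
    (M_second_countable : @second_countable M)
    (M_connected : connected [set: M])
    (w : R -> hatM M) (w_cont : path_space w)
    (w_absorbed : (alpha (inhat [set: M]) w < +oo)%E ->
        forall t : R, (alpha (inhat [set: M]) w <= t%:E)%E -> w t = None)
    (Omega : set M) (Omega_open : open Omega)
    (Om : nat -> set M) (Om_open : forall n, open (Om n))
    (Om_sub : forall n, Om n `<=` Omega)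
    (Om_incr : forall n, Om n `<=` Om n.+1)
    (w0 : exists x0, Om 0%N x0 /\ w 0 = Some x0)
    (Om_cover : \bigcup_n Om n = Omega) :
  ({homo (fun n => alpha (inhat (Om n)) w) : m n / (m <= n)%N >-> (m <= n)%E}
   /\ (fun n => alpha (inhat (Om n)) w) @ \oo --> alpha (inhat Omega) w)
  /\
  ((exists Ups : nat -> set M,
      (forall n, open (Ups n)) /\ (forall n, Ups n `&` Omega = Om n) /\
      closure Omega = \bigcup_n (closure Omega `&` Ups n)) ->
   {homo (fun n => beta (inhat (Om n)) w) : m n / (m <= n)%N >-> (m <= n)%E}
   /\ (fun n => beta (inhat (Om n)) w) @ \oo --> beta (inhat Omega) w).
Proof.
have ahomo : {homo (fun n => alpha (inhat (Om n)) w) : m n / (m <= n)%N >-> (m <= n)%E}.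
  move=> m n mn; apply: alpha_homoU; apply: inhat_sub; exact: (@chain_mono _ Om Om_incr).
split.
  split => //; apply: (@cvg_esup_lim R _ _ ahomo).
  - by move=> n; apply: einf_ge0 => t [].
  - by move=> n; apply: alpha_homoU; apply: inhat_sub.
  - move=> T T0 Ta; exact: (@alpha_key R M w w_cont Omega Om Om_open Om_sub Om_incr w0 Om_cover T T0 Ta).
move=> [Ups [Uo [UO Uc]]].
have bhomo : {homo (fun n => beta (inhat (Om n)) w) : m n / (m <= n)%N >-> (m <= n)%E}.
  move=> m n mn; apply: beta_homoU; apply: inhat_sub; exact: (@chain_mono _ Om Om_incr).
split => //; apply: (@cvg_esup_lim R _ _ bhomo).
- by move=> n; apply: einf_ge0 => t [].
- by move=> n; apply: beta_homoU; apply: inhat_sub.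
- move=> T T0 Tb; have [T' [TT' T'b]] := @edense _ _ _ Tb.
  exact: (@beta_key R M w w_cont w_absorbed Omega Om Om_incr w0 Ups Uo UO Uc T T' T0 TT' T'b).
Qed.
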